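(* Let $p,q$ be integers with $2\le q<p$, and let $\tau:\Sigma_q^\ast\to\{-1,0,\ldots,p-2\}$ be a regular mapping. Let \[ \Gamma(\tau)=\{I=i_1i_2\cdots i_{|I|}\in\Sigma_q^\ast: i_{|I|}\ne0\}\cup\{0\} \] (where $0$ denotes the word of length one consisting of the digit $0$). Then the map $\tau^\ast:\Gamma(\tau)\to\Lambda(\tau)$ is a bijection. Furthermore, if $I,J\in\Gamma(\tau)$ are distinct and $I_{1,k}=J_{1,k}$ for some integer $k\ge0$ (the condition being vacuous for $k=0$), then $|\tau^\ast(I)-\tau^\ast(J)|\ge p^k$.
   Context: Let $\Sigma_q=\{0,1,\ldots,q-1\}$, $\Sigma_q^n$ the words of length $n$, and $\Sigma_q^\ast=\bigcup_{n\ge1}\Sigma_q^n$; $|I|$ is the length of $I$. A map $\tau:\Sigma_q^\ast\to\{-1,0,\ldots,p-2\}$ is a regular mapping if (i) $\tau(0^n)=0$ for all $n\ge1$; (ii) $\tau(i_1\cdots i_n)\in i_n+q\mathbb Z$ for every word $i_1\cdots i_n$; (iii) for every $I\in\Sigma_q^\ast$, $\tau(I0^l)=0$ for all sufficiently large $l$. For $I=i_1\cdots i_n\in\Sigma_q^\ast$ and $k\ge1$, let $I_{1,k}=i_1\cdots i_k$ if $k\le n$ and $I_{1,k}=i_1\cdots i_n0^{k-n}$ if $k>n$. Set $\tau^\ast(I)=\sum_{k=1}^\infty \tau(I_{1,k})p^{k-1}$ (a finite sum by (iii)), and $\Lambda(\tau)=\{\tau^\ast(I): I\in\Sigma_q^\ast\}$.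 *)

(* Defs.v *)
From HB Require Import structures.
From mathcomp Require Import all_boot all_order all_algebra.
From Stdlib Require Import ClassicalEpsilon.
Set Implicit Arguments. Unset Strict Implicit. Unset Printing Implicit Defensive.
Import Order.TTheory GRing.Theory Num.Theory.
Local Open Scope ring_scope.

Definition word (q : nat) (I : seq nat) : bool :=
  (0 < size I)%N && all (fun i => (i < q)%N) I.

(* I_{1,k}: first k letters, padded with zeros if k > |I| *)
Definition wprefix (I : seq nat) (k : nat) : seq nat := take k (I ++ nseq k 0%N).

Definition regular (p q : nat) (tau : seq nat -> int) : Prop :=
  (forall I, word q I -> -1 <= tau I /\ tau I <= (p%:Z - 2)) /\
  (forall n, (1 <= n)%N -> tau (nseq n 0%N) = 0) /\
  (forall I, word q I -> (q%:Z %| tau I - (last 0%N I)%:Z)%Z) /\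
  (forall I, word q I -> exists L, forall l, (L <= l)%N -> tau (I ++ nseq l 0%N) = 0).

Definition tau_partial (p : nat) (tau : seq nat -> int) (I : seq nat) (N : nat) : int :=
  \sum_(k < N) tau (wprefix I k.+1) * (p%:Z ^+ k).

(* tau^*(I) = sum_{k>=1} tau(I_{1,k}) p^{k-1}: the eventual value of the
   partial sums (which exists when tau is regular, by (iii)). *)
Definition tau_star (p : nat) (tau : seq nat -> int) (I : seq nat) : int :=
  epsilon (inhabits 0%R)
    (fun v => exists N0, forall N, (N0 <= N)%N -> tau_partial p tau I N = v).

Definition Gamma (q : nat) (I : seq nat) : bool :=
  word q I && ((last 0%N I != 0%N) || (I == [:: 0%N])).

(* Main.v *)
Require Import Defs.
From HB Require Import structures.
From mathcomp Require Import all_boot all_order all_algebra.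
From mathcomp Require Import zify ring lra.
From Stdlib Require Import ClassicalEpsilon.
Import Order.TTheory GRing.Theory Num.Theory.
Local Open Scope ring_scope.

Lemma wprefix_mkseq (I : seq nat) k : wprefix I k = mkseq (nth 0%N I) k.
Proof.
apply: (@eq_from_nth _ 0%N).
  rewrite size_mkseq /wprefix size_take size_cat size_nseq.
  by case: ifP => //; lia.
move=> i; rewrite /wprefix size_take size_cat size_nseq.
have -> : (if (k < size I + k)%N then k else (size I + k)%N) = k by case: ifP; lia.
move=> Hi; rewrite nth_mkseq // nth_take // nth_cat.
case: ifP => // /negbT; rewrite -leqNgt => Hs.
by rewrite nth_nseq nth_default //; case: ifP.
Qed.

Lemma word_wprefix q I k : (0 < q)%N -> word q I -> word q (wprefix I k.+1).
Proof.
move=> q0 /andP [_ /allP HI]; rewrite /word wprefix_mkseq.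
apply/andP; split; first by rewrite size_mkseq.
apply/allP => x /mapP [i _ ->].
case: (ltnP i (size I)) => Hi; first by apply: HI; apply: mem_nth.
by rewrite nth_default.
Qed.

Lemma last_wprefix I k : last 0%N (wprefix I k.+1) = nth 0%N I k.
Proof. by rewrite -nth_last wprefix_mkseq size_mkseq nth_mkseq. Qed.

Lemma tau_star_spec p q tau I : (0 < q)%N -> regular p q tau -> word q I ->
  exists N0, forall N, (N0 <= N)%N -> tau_star p tau I = tau_partial p tau I N.
Proof.
move=> q0 [_ [_ [_ H4]]] wI.
have [L HL] := H4 I wI.
set N0 := (size I + L)%N.
have Z : forall N, (N0 <= N)%N -> tau (wprefix I N.+1) = 0.
  move=> N HN.
  have -> : wprefix I N.+1 = I ++ nseq (N.+1 - size I) 0%N.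
    rewrite /wprefix take_cat.
    have -> : (N.+1 < size I)%N = false by apply/negbTE; rewrite -leqNgt; lia.
    congr (_ ++ _); apply: (@eq_from_nth _ 0%N).
      by rewrite size_take !size_nseq; case: ifP => //; lia.
    move=> i; rewrite size_take !size_nseq => Hi.
    rewrite nth_take; last by move: Hi; case: ifP => //; lia.
    by rewrite !nth_nseq; do 2 case: ifP => //.
  apply: HL; lia.
have P : forall d, tau_partial p tau I (N0 + d) = tau_partial p tau I N0.
  elim=> [|d IH]; first by rewrite addn0.
  by rewrite addnS /tau_partial big_ord_recr /= Z ?leq_addr // mul0r addr0.
have := @epsilon_spec int (inhabits 0) (fun v => exists N0, forall N, (N0 <= N)%N -> tau_partial p tau I N = v).
case.
  exists (tau_partial p tau I N0); exists N0 => N HN.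
  by rewrite -(subnKC HN) P.
by move=> N1 HN1; exists N1 => N HN; rewrite /tau_star (HN1 N HN).
Qed.

Lemma digits_uniq (p : nat) N : (0 < p)%N -> forall (a b : nat -> int),
  (forall k, -1 <= a k /\ a k <= p%:Z - 2) ->
  (forall k, -1 <= b k /\ b k <= p%:Z - 2) ->
  \sum_(k < N) a k * p%:Z ^+ k = \sum_(k < N) b k * p%:Z ^+ k ->
  forall k, (k < N)%N -> a k = b k.
Proof.
move=> p0; elim: N => [|N IH] a b Ha Hb E k Hk //.
move: E; rewrite !big_ord_recl /= !expr0 !mulr1.
have sh : forall c : nat -> int, \sum_(i < N) c (bump 0 i) * p%:Z ^+ (bump 0 i)
    = p%:Z * \sum_(i < N) c i.+1 * p%:Z ^+ i.
  move=> c; rewrite mulr_sumr; apply: eq_bigr => i _.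
  by rewrite /bump /= add1n exprS; ring.
rewrite !sh => E.
set A := \sum_(i < N) a i.+1 * p%:Z ^+ i in E.
set B := \sum_(i < N) b i.+1 * p%:Z ^+ i in E.
have [Ha1 Ha2] := Ha 0%N; have [Hb1 Hb2] := Hb 0%N.
have AB : A = B.
  have : a 0%N - b 0%N = p%:Z * (B - A) by rewrite mulrBr; lra.
  have pz : 1 <= p%:Z by rewrite lez_nat.
  move=> E2; apply/eqP; rewrite -subr_eq0 -oppr_eq0 opprB; apply/negPn/negP => Hne.
  case: (ltrgtP (B - A) 0) => Hs; last by move: Hne; rewrite Hs eqxx.
    have : B - A <= -1 by lia.
    move=> H1; have : p%:Z * (B - A) <= - p%:Z by nia.
    lia.
  have : 1 <= B - A by lia.
  move=> H1; have : p%:Z <= p%:Z * (B - A) by nia.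
  lia.
case: k Hk => [|k] Hk.
  by rewrite AB in E; lra.
apply: (IH (fun i => a i.+1) (fun i => b i.+1)) => //.
Qed.

Lemma small_mult (x y d q : int) : 0 <= x -> x < q -> 0 <= y -> y < q ->
  x - y = d * q -> x = y.
Proof.
move=> *; case: (ltrgtP d 0) => Hd.
- have : d <= -1 by lia.
  move=> H1; have : d * q <= - q by nia.
  lia.
- have : 1 <= d by lia.
  move=> H1; have : q <= d * q by nia.
  lia.
- subst d; lra.
Qed.

Lemma Gamma_nth q I J : Gamma q I -> Gamma q J ->
  (forall k, nth 0%N I k = nth 0%N J k) -> I = J.
Proof.
have key : forall I J, Gamma q I -> Gamma q J -> last 0%N I != 0%N ->
    (forall k, nth 0%N I k = nth 0%N J k) -> I = J.
  move=> {}I {}J /andP [/andP [sI _] _] /andP [/andP [sJ _] gJ] lI E.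
  have lJ : last 0%N J != 0%N.
    case/orP: gJ => // /eqP eJ; subst J.
    by move: lI; rewrite -nth_last E; case: (size I).-1 => [|n] //=; rewrite nth_nil.
  have : size I = size J.
    apply/eqP; rewrite eqn_leq; apply/andP; split; rewrite leqNgt; apply/negP => Hlt.
      by move: lI; rewrite -nth_last E nth_default ?eqxx //; lia.
    by move: lJ; rewrite -nth_last -E nth_default ?eqxx //; lia.
  by move=> Hs; apply: (eq_from_nth (x0 := 0%N) Hs) => i _; apply: E.
move=> GI GJ E.
case: (boolP (last 0%N I != 0%N)) => lI; first exact: key.
case: (boolP (last 0%N J != 0%N)) => lJ.
  by symmetry; apply: key => // k; rewrite E.
move: GI GJ; rewrite /Gamma (negbTE lI) (negbTE lJ) /= => /andP [_ /eqP ->] /andP [_ /eqP ->] //.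
Qed.

Lemma tau_digits p q tau I J : (2 <= q)%N -> (q < p)%N -> regular p q tau ->
  word q I -> word q J -> tau_star p tau I = tau_star p tau J ->
  forall k, tau (wprefix I k.+1) = tau (wprefix J k.+1).
Proof.
move=> q2 qp R wI wJ E k.
have q0 : (0 < q)%N by lia.
have [N1 H1] := @tau_star_spec p q tau I q0 R wI.
have [N2 H2] := @tau_star_spec p q tau J q0 R wJ.
set N := maxn (maxn N1 N2) k.+1.
have EN : tau_partial p tau I N = tau_partial p tau J N.
  rewrite -H1; last by rewrite /N; lia.
  by rewrite E (H2 N) // /N; lia.
apply: (@digits_uniq p N _ (fun k => tau (wprefix I k.+1)) (fun k => tau (wprefix J k.+1))) => //.
- by lia.
- by move=> j; apply: R.1; apply: word_wprefix.
- by move=> j; apply: R.1; apply: word_wprefix.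
- by rewrite /N; lia.
Qed.

Lemma letters_eq p q tau I J : (0 < q)%N -> regular p q tau -> word q I -> word q J ->
  forall k, tau (wprefix I k.+1) = tau (wprefix J k.+1) -> nth 0%N I k = nth 0%N J k.
Proof.
move=> q0 R wI wJ k E.
have D := R.2.2.1.
have /dvdzP [c1 Hc1] := D _ (@word_wprefix q I k q0 wI).
have /dvdzP [c2 Hc2] := D _ (@word_wprefix q J k q0 wJ).
rewrite !last_wprefix in Hc1 Hc2.
have ltI : (nth 0%N I k < q)%N.
  case/andP: wI => _ /allP HI; case: (ltnP k (size I)) => Hk.
    by apply: HI; apply: mem_nth.
  by rewrite nth_default.
have ltJ : (nth 0%N J k < q)%N.
  case/andP: wJ => _ /allP HI; case: (ltnP k (size J)) => Hk.
    by apply: HI; apply: mem_nth.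
  by rewrite nth_default.
apply/eqP; rewrite -(eqr_nat int); apply/eqP.
apply: (@small_mult _ _ (c2 - c1) q%:Z); rewrite ?natz ?mulrBl; lia.
Qed.

Lemma tau_star_nth p q tau I J : (0 < q)%N -> regular p q tau -> word q I -> word q J ->
  (forall k, nth 0%N I k = nth 0%N J k) -> tau_star p tau I = tau_star p tau J.
Proof.
move=> q0 R wI wJ E.
have [N1 H1] := @tau_star_spec p q tau I q0 R wI.
have [N2 H2] := @tau_star_spec p q tau J q0 R wJ.
rewrite (H1 (maxn N1 N2)) ?leq_maxl // (H2 (maxn N1 N2)) ?leq_maxr //.
apply: eq_bigr => i _; rewrite !wprefix_mkseq.
by rewrite (@eq_mkseq _ (nth 0%N I) (nth 0%N J)).
Qed.

Lemma surj_nth q J : word q J -> exists I, Gamma q I /\ forall k, nth 0%N I k = nth 0%N J k.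
Proof.
elim/last_ind: J => [|J x IH]; first by rewrite /word.
move=> wJx.
case: (boolP (x == 0%N)) => [/eqP x0|xn0]; last first.
  by exists (rcons J x); split => //; rewrite /Gamma wJx last_rcons xn0.
subst x.
case: J IH wJx => [|y J] IH wJx.
  exists [:: 0%N]; split => //.
  by apply/andP; split; [exact: wJx | rewrite eqxx orbT].
have wJ : word q (y :: J).
  by move: wJx; rewrite /word all_rcons => /andP [_ /andP [_ ->]].
have [I [GI EI]] := IH wJ.
exists I; split => // k; rewrite EI nth_rcons.
case: ifP => // /negbT; rewrite -leqNgt => H; rewrite nth_default //.
by case: ifP.
Qed.

Lemma dvd_sum (p : nat) k (c : nat -> int) : (forall j, (j < k)%N -> c j = 0) ->
  forall N, exists m, \sum_(j < N) c j * p%:Z ^+ j = p%:Z ^+ k * m.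
Proof.
move=> Hc; elim=> [|N [m Hm]]; first by exists 0; rewrite big_ord0 mulr0.
rewrite big_ord_recr /= Hm.
case: (ltnP N k) => HN.
  by exists m; rewrite Hc // mul0r addr0.
exists (m + c N * p%:Z ^+ (N - k)).
by rewrite -(subnKC HN) exprD addKn; ring.
Qed.

Lemma tau_inj p q tau I J : (2 <= q)%N -> (q < p)%N -> regular p q tau ->
  Gamma q I -> Gamma q J -> tau_star p tau I = tau_star p tau J -> I = J.
Proof.
move=> q2 qp R GI GJ E.
have wI : word q I by case/andP: GI.
have wJ : word q J by case/andP: GJ.
apply: Gamma_nth GI GJ _ => k.
apply: (@letters_eq p q tau) => //; first by lia.
exact: (@tau_digits p q tau I J).
Qed.

Theorem lemma2p2 (p q : nat) (tau : seq nat -> int) :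
  (2 <= q)%N -> (q < p)%N -> regular p q tau ->
  (* tau^* : Gamma(tau) -> Lambda(tau) is injective *)
  (forall I J, Gamma q I -> Gamma q J -> tau_star p tau I = tau_star p tau J -> I = J) /\
  (* ... and onto Lambda(tau) = { tau^*(J) : J in Sigma_q^* } *)
  (forall J, word q J -> exists I, Gamma q I /\ tau_star p tau I = tau_star p tau J) /\
  (* separation estimate *)
  (forall I J (k : nat), Gamma q I -> Gamma q J -> I <> J ->
     wprefix I k = wprefix J k ->
     p%:Z ^+ k <= `|tau_star p tau I - tau_star p tau J|).
Proof.
move=> q2 qp R.
have q0 : (0 < q)%N by lia.
split; first by move=> I J; apply: tau_inj.
split.
  move=> J wJ; have [I [GI EI]] := @surj_nth q J wJ.
  exists I; split => //; apply: (@tau_star_nth p q tau I J q0 R) => //; by case/andP: GI.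
move=> I J k GI GJ nIJ Ek.
have wI : word q I by case/andP: GI.
have wJ : word q J by case/andP: GJ.
have En : forall j, (j < k)%N -> nth 0%N I j = nth 0%N J j.
  move=> j Hj; move: Ek; rewrite !wprefix_mkseq => /(congr1 (fun s => nth 0%N s j)).
  by rewrite !nth_mkseq.
set c := fun j => tau (wprefix I j.+1) - tau (wprefix J j.+1).
have Hc : forall j, (j < k)%N -> c j = 0.
  move=> j Hj; rewrite /c !wprefix_mkseq.
  have -> : mkseq (nth 0%N I) j.+1 = mkseq (nth 0%N J) j.+1; last by rewrite subrr.
  apply: (eq_from_nth (x0 := 0%N)); first by rewrite !size_mkseq.
  move=> i; rewrite size_mkseq => Hi; rewrite !nth_mkseq //; apply: En; lia.
have [N1 H1] := @tau_star_spec p q tau I q0 R wI.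
have [N2 H2] := @tau_star_spec p q tau J q0 R wJ.
have [m Hm] := @dvd_sum p k c Hc (maxn N1 N2).
have D : tau_star p tau I - tau_star p tau J = p%:Z ^+ k * m.
  rewrite (H1 (maxn N1 N2)) ?leq_maxl // (H2 (maxn N1 N2)) ?leq_maxr // -Hm.
  rewrite /tau_partial -sumrB; apply: eq_bigr => i _; rewrite /c; ring.
have m0 : m != 0.
  apply/negP => /eqP m0; apply: nIJ; apply: (@tau_inj p q tau I J q2 qp R GI GJ).
  by apply/eqP; rewrite -subr_eq0 D m0 mulr0.
rewrite D normrM ger0_norm ?exprn_ge0 //.
apply: ler_peMr; first by rewrite exprn_ge0.
by rewrite -gtz0_ge1 normr_gt0.
Qed.
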